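(* Under the standing setup, let $\hat V_\tau$ be the extended heuristic on all of $\mathbb R^D$. Then: (i) for every $t\in\{0,\dots,T-2\}$, $l\in\{0,\dots,k\}$, $s\in\mathbb R^D$ and $a\in\mathcal A'_{l,t}$, writing $(s_a,l_a)=F^+_{\tau,t}((s,l),a)$, $$\hat V_\tau(s,l,t)\ge R(s,a)+\hat V_\tau(s_a,l_a,t+1);$$ (ii) for every $l\in\{0,\dots,k\}$, $s\in\mathbb R^D$ and $a\in\mathcal A'_{l,T-1}$, $\hat V_\tau(s,l,T-1)\ge R(s,a)+\hat V_\tau(\cdot,k,T)=R(s,a)$. In other words, $\hat V_\tau$ is a consistent heuristic for the search graph whose nodes are $(s,l,t)$ and whose edges are labeled by $a\in\mathcal A'_{l,t}$, carry reward $R(s,a)$, and lead to $(s_a,l_a,t+1)$ (or to a goal node at time $T$ when $t=T-1$).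
   Context: Standing setup: state space $\mathcal S=\mathbb R^D$, finite action set $\mathcal A$, horizon $T\ge2$, noise space $\mathcal U$. A transition mechanism $g_S:\mathcal S\times\mathcal A\times\mathcal U\to\mathcal S$ is bijective in its last argument, with inverse $g_S^{-1}:\mathcal S\times\mathcal A\times\mathcal S\to\mathcal U$ satisfying $u=g_S^{-1}(s,a,s')$ whenever $s'=g_S(s,a,u)$. Reward $R:\mathcal S\times\mathcal A\to\mathbb R$. Lipschitz assumption: for each $a\in\mathcal A,u\in\mathcal U$ there is $K_{a,u}\ge0$ with $\|g_S(s,a,u)-g_S(s',a,u)\|\le K_{a,u}\|s-s'\|$, and for each $a$ there is $C_a\ge0$ with $|R(s,a)-R(s',a)|\le C_a\|s-s'\|$, for all $s,s'\in\mathcal S$ (Euclidean norm). An observed episode $\tau$ consists of states $s_0,\dots,s_{T-1}$ and actions $a_0,\dots,a_{T-1}$; put $u_t=g_S^{-1}(s_t,a_t,s_{t+1})$ for $t=0,\dots,T-2$. Fix a budget $k\in\{0,\dots,T\}$. For $t\le T-2$ define $F^+_{\tau,t}((s,l),a)=\big(g_S(s,a,u_t),\,l+\mathbf 1[a\ne a_t]\big)$. Constants: $K_{u_t}=\max_{a}K_{a,u_t}$, $C=\max_a C_a$, $L_{T-1}=C$, $L_t=C+L_{t+1}K_{u_t}$ for $t\le T-2$. For $l\in\{0,\dots,k\}$ and time $t$, let $\mathcal A'_{l,t}=\{a_t\}$ if $l=k$ and $\mathcal A'_{l,t}=\mathcal A$ if $l<k$. Let $\mathcal S_\dagger\subset\mathbb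 R^D$ be a finite nonempty anchor set. Anchor recursion (for $s\in\mathcal S_\dagger$): $\hat V_\tau(s,l,T-1)=\max_{a\in\mathcal A}R(s,a)$ for $l<k$ and $\hat V_\tau(s,k,T-1)=R(s,a_{T-1})$; for $t=T-2,\dots,0$, $\hat V_\tau(s,l,t)=\max_{a\in\mathcal A'_{l,t}}\{R(s,a)+\min_{s_\dagger\in\mathcal S_\dagger}\{\hat V_\tau(s_\dagger,l_a,t+1)+L_{t+1}\|s_\dagger-s_a\|\}\}$ with $(s_a,l_a)=F^+_{\tau,t}((s,l),a)$. Extended heuristic (for all $s\in\mathbb R^D$): $\hat V_\tau(s,l,T)=0$; $\hat V_\tau(s,l,T-1)=\max_{a\in\mathcal A'_{l,T-1}}R(s,a)$; and for $t\le T-2$, $\hat V_\tau(s,l,t)=\max_{a\in\mathcal A'_{l,t}}\{R(s,a)+\min_{s_\dagger\in\mathcal S_\dagger}\{\hat V_\tau(s_\dagger,l_a,t+1)+L_{t+1}\|s_\dagger-s_a\|\}\}$, where the values $\hat V_\tau(s_\dagger,\cdot,t+1)$ at anchors are those of the anchor recursion (which coincide with the extended formula on anchors). *)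

(* Defs.v *)
From HB Require Import structures.
From mathcomp Require Import all_boot all_order all_algebra.
From mathcomp Require Import reals.
Set Implicit Arguments. Unset Strict Implicit. Unset Printing Implicit Defensive.
Import Order.TTheory GRing.Theory Num.Theory.
Local Open Scope ring_scope.

Definition enorm (R : realType) (D : nat) (x : 'rV[R]_D) : R :=
  Num.sqrt (\sum_(i < D) (x ord0 i) ^+ 2).

Section Heuristic.
Variables (R : realType) (D : nat) (A : finType) (U : Type).
Variable (T : nat).
Variable (g : 'rV[R]_D -> A -> U -> 'rV[R]_D).
Variable (ginv : 'rV[R]_D -> A -> 'rV[R]_D -> U).
Variable (Rw : 'rV[R]_D -> A -> R).
Variable (K : A -> U -> R) (C : A -> R).
Variable (st : nat -> 'rV[R]_D) (acts : nat -> A).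
Variable (k : nat).
Variable (anchors : seq 'rV[R]_D).

Definition noise (t : nat) : U := ginv (st t) (acts t) (st t.+1).

Definition Fplus (t : nat) (s : 'rV[R]_D) (l : nat) (a : A) : 'rV[R]_D * nat :=
  (g s a (noise t), l + (a != acts t)).

(* K_{u_t} = max_a K_{a,u_t}, C = max_a C_a (the K, C are nonnegative) *)
Definition Ku (t : nat) : R := \big[Num.max/0]_(a : A) K a (noise t).
Definition Cmax : R := \big[Num.max/0]_(a : A) C a.

(* Laux n = L_{T-1-n}: L_{T-1} = C, L_t = C + L_{t+1} K_{u_t} *)
Fixpoint Laux (n : nat) : R :=
  match n with
  | 0 => Cmax
  | n'.+1 => Cmax + Laux n' * Ku (T - 2 - n')
  end.
Definition L (t : nat) : R := Laux (T - 1 - t).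

Definition inAprime (l t : nat) (a : A) : bool :=
  if l == k then a == acts t else true.

Definition maxAprime (l t : nat) (f : A -> R) : R :=
  if l == k then f (acts t) else \big[Num.max/f (acts t)]_(a : A) f a.

Definition minAnchors (f : 'rV[R]_D -> R) : R :=
  \big[Num.min/f (head 0 anchors)]_(x <- anchors) f x.

(* Vaux n s l = hat V_tau(s, l, T-1-n), the extended heuristic (which
   coincides with the anchor recursion on anchors) *)
Fixpoint Vaux (n : nat) (s : 'rV[R]_D) (l : nat) : R :=
  match n with
  | 0 => maxAprime l (T - 1) (fun a => Rw s a)
  | n'.+1 =>
      let t := (T - 2 - n')%N in
      maxAprime l t (fun a =>
        Rw s a + minAnchors (fun sd =>
          Vaux n' sd (Fplus t s l a).2 + L t.+1 * enorm (sd - (Fplus t s l a).1)))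
  end.

(* hat V_tau(s, l, t); equal to 0 at t = T (and, irrelevantly, for t > T) *)
Definition Vhat (s : 'rV[R]_D) (l t : nat) : R :=
  if (t < T)%N then Vaux (T - 1 - t) s l else 0.

End Heuristic.

(* Main.v *)
Require Import Defs.
From HB Require Import structures.
From mathcomp Require Import all_boot all_order all_algebra.
From mathcomp Require Import reals ring lra zify.
Import Order.TTheory GRing.Theory Num.Theory.
Local Open Scope ring_scope.

Section H.
Variable R : realType.

Lemma bmax_ge (I : eqType) (r : seq I) (x0 : R) F x :
  x \in r -> F x <= \big[Num.max/x0]_(y <- r) F y.
Proof.
elim: r => // y r IH; rewrite in_cons big_cons => /orP[/eqP->|/IH H].
  by rewrite le_max lexx.
by rewrite le_max H orbT.
Qed.

Lemma bmin_le (I : eqType) (r : seq I) (x0 : R) F x :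
  x \in r -> \big[Num.min/x0]_(y <- r) F y <= F x.
Proof.
elim: r => // y r IH; rewrite in_cons big_cons => /orP[/eqP->|/IH H].
  by rewrite ge_min lexx.
by rewrite ge_min H orbT.
Qed.

Lemma CS D (f g : 'I_D -> R) :
  (\sum_i f i * g i) ^+ 2 <= (\sum_i f i ^+ 2) * (\sum_i g i ^+ 2).
Proof.
have H0 : 0 <= \sum_i \sum_j (f i * g j - f j * g i) ^+ 2.
  by apply: sumr_ge0 => i _; apply: sumr_ge0 => j _; apply: sqr_ge0.
have E : \sum_i \sum_j (f i * g j - f j * g i) ^+ 2 =
   2 * ((\sum_i f i ^+ 2) * (\sum_i g i ^+ 2) - (\sum_i f i * g i) ^+ 2).
  have E1 : forall i j, (f i * g j - f j * g i) ^+ 2 =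
     f i ^+ 2 * g j ^+ 2 + g i ^+ 2 * f j ^+ 2 - 2 * ((f i * g i) * (f j * g j)).
    by move=> i j; rewrite !expr2; ring.
  under eq_bigr => i _ do under eq_bigr => j _ do rewrite E1.
  under eq_bigr => i _ do rewrite sumrB big_split /= -!mulr_sumr.
  rewrite sumrB big_split /= -!mulr_suml.
  rewrite -mulr_sumr -mulr_suml [X in _ = 2 * (_ - X)]expr2; ring.
rewrite E in H0; rewrite -subr_ge0.
by rewrite pmulr_rge0 in H0.
Qed.

Lemma enorm_ge0 D (x : 'rV[R]_D) : 0 <= enorm x.
Proof. exact: sqrtr_ge0. Qed.

Lemma sqrt_le_of (x y : R) : 0 <= y -> x <= y ^+ 2 -> Num.sqrt x <= y.
Proof.
move=> y0 h; rewrite -(ger0_norm y0) -sqrtr_sqr ler_sqrt //; exact: sqr_ge0.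
Qed.

Lemma enorm_triangle D (u v : 'rV[R]_D) : enorm (u + v) <= enorm u + enorm v.
Proof.
rewrite /enorm; apply: sqrt_le_of; first by rewrite addr_ge0 ?sqrtr_ge0.
have a0 : 0 <= \sum_(i < D) u ord0 i ^+ 2 by apply: sumr_ge0 => i _; apply: sqr_ge0.
have b0 : 0 <= \sum_(i < D) v ord0 i ^+ 2 by apply: sumr_ge0 => i _; apply: sqr_ge0.
have E : \sum_(i < D) (u + v) ord0 i ^+ 2 = \sum_(i < D) u ord0 i ^+ 2
   + 2 * \sum_(i < D) u ord0 i * v ord0 i + \sum_(i < D) v ord0 i ^+ 2.
  rewrite mulr_sumr -!big_split /=; apply: eq_bigr => i _; rewrite mxE; ring.
rewrite E sqrrD !sqr_sqrtr //.
have : \sum_(i < D) u ord0 i * v ord0 i <=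
   Num.sqrt (\sum_(i < D) u ord0 i ^+ 2) * Num.sqrt (\sum_(i < D) v ord0 i ^+ 2).
  rewrite -sqrtrM //; apply: le_trans (ler_norm _) _.
  rewrite -sqrtr_sqr ler_sqrt; first exact: CS.
  by rewrite mulr_ge0.
lra.
Qed.
End H.
Section M.
Variables (R : realType) (D : nat) (A : finType) (U : Type) (T : nat)
    (g : 'rV[R]_D -> A -> U -> 'rV[R]_D) (ginv : 'rV[R]_D -> A -> 'rV[R]_D -> U)
    (Rw : 'rV[R]_D -> A -> R) (K : A -> U -> R) (C : A -> R)
    (st : nat -> 'rV[R]_D) (acts : nat -> A) (k : nat) (anchors : seq 'rV[R]_D).
Hypotheses (K0 : forall a u, 0 <= K a u)
  (HK : forall a u s s', enorm (g s a u - g s' a u) <= K a u * enorm (s - s'))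
  (C0 : forall a, 0 <= C a)
  (HC : forall a s s', `|Rw s a - Rw s' a| <= C a * enorm (s - s'))
  (Hne : anchors != [::]).

Lemma maxAprime_ge l t (F : A -> R) a :
  inAprime acts k l t a -> F a <= maxAprime acts k l t F.
Proof.
rewrite /inAprime /maxAprime; case: (l == k) => [/eqP->//|_].
exact: bmax_ge (mem_index_enum _).
Qed.

Lemma maxAprime_mono l t (F G : A -> R) c :
  (forall a, F a <= G a + c) -> maxAprime acts k l t F <= maxAprime acts k l t G + c.
Proof.
move=> h; rewrite /maxAprime; case: (l == k) => //.
set M := \big[_/_]_(a : A) G a.
have HG : forall a, G a <= M by move=> a; exact: bmax_ge (mem_index_enum _).
apply: (big_ind (fun x => x <= M + c)).
- by apply: le_trans (h _) _; rewrite lerD2r.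
- by move=> x y hx hy; rewrite ge_max hx hy.
- by move=> a _; apply: le_trans (h _) _; rewrite lerD2r.
Qed.

Lemma minAnchors_ge (F : 'rV[R]_D -> R) c :
  (forall sd, c <= F sd) -> c <= minAnchors anchors F.
Proof.
move=> h; rewrite /minAnchors; apply: (big_ind (fun x => c <= x)) => //.
by move=> x y hx hy; rewrite le_min hx hy.
Qed.

Lemma minAnchors_mono (F G : 'rV[R]_D -> R) c :
  (forall sd, F sd <= G sd + c) -> minAnchors anchors F <= minAnchors anchors G + c.
Proof.
move=> h.
have Hm : forall sd, sd \in anchors -> minAnchors anchors F <= F sd.
  by move=> sd hs; exact: bmin_le.
have hd : head 0 anchors \in anchors by case: anchors Hne => // x r _; exact: mem_head.
rewrite {2}/minAnchors big_seq.
apply: (big_ind (fun x => minAnchors anchors F <= x + c)).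
- by apply: le_trans (Hm _ hd) (h _).
- by move=> x y hx hy; rewrite addr_minl le_min hx hy.
- by move=> sd hs; apply: le_trans (Hm _ hs) (h _).
Qed.

Lemma Cmax_ge0 : 0 <= Cmax C.
Proof. by rewrite /Cmax; apply: (big_ind (fun x => 0 <= x)) => // x y hx _; rewrite le_max hx. Qed.

Lemma C_le a : C a <= Cmax C.
Proof. exact: bmax_ge (mem_index_enum _). Qed.

Lemma Ku_ge0 t : 0 <= Ku ginv K st acts t.
Proof. by rewrite /Ku; apply: (big_ind (fun x => 0 <= x)) => // x y hx _; rewrite le_max hx. Qed.

Lemma K_le a t : K a (noise ginv st acts t) <= Ku ginv K st acts t.
Proof. exact: bmax_ge (mem_index_enum _). Qed.

Lemma Laux_ge0 n : 0 <= Laux T ginv K C st acts n.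
Proof.
elim: n => [|n IH] /=; first exact: Cmax_ge0.
by rewrite addr_ge0 ?Cmax_ge0 // mulr_ge0 ?Ku_ge0.
Qed.

Lemma Rw_lip a s s' : Rw s a <= Rw s' a + Cmax C * enorm (s' - s).
Proof.
have h := HC a s' s; rewrite distrC in h.
have h2 := ler_norm (Rw s a - Rw s' a).
have h3 : C a * enorm (s' - s) <= Cmax C * enorm (s' - s).
  by rewrite ler_wpM2r ?enorm_ge0 ?C_le.
lra.
Qed.

Lemma Vaux_lip n s s' l : (n <= T - 2)%N ->
  Vaux T g ginv Rw K C st acts k anchors n s l <=
  Vaux T g ginv Rw K C st acts k anchors n s' l + Laux T ginv K C st acts n * enorm (s' - s).
Proof.
case: n => [|n] hn /=.
  by apply: maxAprime_mono => a; exact: Rw_lip.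
have EL : L T ginv K C st acts (T - 2 - n).+1 = Laux T ginv K C st acts n.
  by rewrite /L; congr Laux; lia.
rewrite EL.
set Ln := Laux _ _ _ _ _ _ n.
set t := (T - 2 - n)%N.
set e := enorm (s' - s).
have Ln0 : 0 <= Ln by exact: Laux_ge0.
have e0 : 0 <= e by exact: enorm_ge0.
apply: maxAprime_mono => a.
have hR := Rw_lip a s s'; rewrite -/e in hR.
have hM : minAnchors anchors (fun sd => Vaux T g ginv Rw K C st acts k anchors n sd
              (Fplus g ginv st acts t s l a).2 + Ln * enorm (sd - (Fplus g ginv st acts t s l a).1))
  <= minAnchors anchors (fun sd => Vaux T g ginv Rw K C st acts k anchors n sd
              (Fplus g ginv st acts t s' l a).2 + Ln * enorm (sd - (Fplus g ginv st acts t s' l a).1))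
     + Ln * Ku ginv K st acts t * e.
  apply: minAnchors_mono => sd /=.
  set u := noise ginv st acts t.
  have tri := @enorm_triangle R D (sd - g s' a u) (g s' a u - g s a u).
  have E : sd - g s' a u + (g s' a u - g s a u) = sd - g s a u.
    by rewrite addrA subrK.
  rewrite E in tri.
  have hk := HK a u s' s.
  have hk2 : K a u * enorm (s' - s) <= Ku ginv K st acts t * e.
    by rewrite ler_wpM2r ?K_le.
  have : Ln * enorm (sd - g s a u) <= Ln * (enorm (sd - g s' a u) + Ku ginv K st acts t * e).
    by rewrite ler_wpM2l //; apply: le_trans tri _; rewrite lerD2l; apply: le_trans hk hk2.
  rewrite mulrDr mulrA; lra.
have hC : Cmax C * e + Ln * Ku ginv K st acts t * e = (Cmax C + Ln * Ku ginv K st acts t) * e.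
  by ring.
lra.
Qed.

Lemma part1 t l s a : (2 <= T)%N -> (t <= T - 2)%N -> inAprime acts k l t a ->
  Rw s a + Vhat T g ginv Rw K C st acts k anchors (Fplus g ginv st acts t s l a).1
        (Fplus g ginv st acts t s l a).2 t.+1
  <= Vhat T g ginv Rw K C st acts k anchors s l t.
Proof.
move=> hT ht ha; rewrite /Vhat.
have h1 : (t < T)%N by lia.
have h2 : (t.+1 < T)%N by lia.
rewrite h1 h2.
rewrite (_ : (T - 1 - t)%N = (T - 2 - t).+1); last by lia.
rewrite (_ : (T - 1 - t.+1)%N = (T - 2 - t)%N); last by lia.
rewrite [Vaux _ _ _ _ _ _ _ _ _ _ _.+1 _ _]/=.
rewrite (_ : (T - 2 - (T - 2 - t))%N = t); last by lia.
apply: le_trans (maxAprime_ge _ _ _ _ ha); rewrite lerD2l.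
apply: minAnchors_ge => sd.
have EL : L T ginv K C st acts t.+1 = Laux T ginv K C st acts (T - 2 - t).
  by rewrite /L; congr Laux; lia.
rewrite EL; apply: Vaux_lip; lia.
Qed.
End M.

Theorem theorem2 (R : realType) (D : nat) (A : finType) (U : Type) (T : nat)
    (g : 'rV[R]_D -> A -> U -> 'rV[R]_D) (ginv : 'rV[R]_D -> A -> 'rV[R]_D -> U)
    (Rw : 'rV[R]_D -> A -> R) (K : A -> U -> R) (C : A -> R)
    (st : nat -> 'rV[R]_D) (acts : nat -> A) (k : nat) (anchors : seq 'rV[R]_D) :
  (2 <= T)%N ->
  (k <= T)%N ->
  (* g_S is bijective in its last argument with inverse ginv *)
  (forall s a u, ginv s a (g s a u) = u) ->
  (forall s a s', g s a (ginv s a s') = s') ->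
  (* Lipschitz assumptions *)
  (forall a u, 0 <= K a u) ->
  (forall a u s s', enorm (g s a u - g s' a u) <= K a u * enorm (s - s')) ->
  (forall a, 0 <= C a) ->
  (forall a s s', `|Rw s a - Rw s' a| <= C a * enorm (s - s')) ->
  (* finite nonempty anchor set *)
  anchors != [::] ->
  let V := Vhat T g ginv Rw K C st acts k anchors in
  (* (i) *)
  (forall (t l : nat) (s : 'rV[R]_D) (a : A),
      (t <= T - 2)%N -> (l <= k)%N -> inAprime acts k l t a ->
      let sa := (Fplus g ginv st acts t s l a).1 in
      let la := (Fplus g ginv st acts t s l a).2 in
      Rw s a + V sa la t.+1 <= V s l t)
  /\
  (* (ii) *)
  (forall (l : nat) (s : 'rV[R]_D) (a : A),
      (l <= k)%N -> inAprime acts k l (T - 1)%N a ->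
      Rw s a + V s k T <= V s l (T - 1)%N /\ Rw s a + V s k T = Rw s a).
Proof.
move=> hT hk _ _ K0 HK C0 HC Hne V; split.
  move=> t l s a ht hl ha.
  exact: (@part1 R D A U T g ginv Rw K C st acts k anchors K0 HK C0 HC Hne t l s a hT ht ha).
move=> l s a hl ha; rewrite /V /Vhat ltnn addr0.
have h1 : (T - 1 < T)%N by lia.
rewrite h1 subnn /=; split => //.
exact: maxAprime_ge.
Qed.
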